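(* Let $(L,[\cdot,\cdot],\{\cdot,\cdot,\cdot\},\alpha)$ be a Hom-Lie-Yamaguti algebra over a field $\mathbb{K}$. If $HomH^2(L,L)\times HomH^3(L,L)=0$, then $(L,[\cdot,\cdot],\{\cdot,\cdot,\cdot\},\alpha)$ is analytically rigid.
   Context: A Hom-Lie-Yamaguti algebra (HLYA) over a commutative ring $R$ (here $R=\mathbb{K}$ a field or $R=\mathbb{K}[[t]]$) is a quadruple $(L,[\cdot,\cdot],\{\cdot,\cdot,\cdot\},\alpha)$ where $L$ is an $R$-module, $[\cdot,\cdot]$ is an $R$-bilinear and $\{\cdot,\cdot,\cdot\}$ an $R$-trilinear operation on $L$ (written $[xy]$, $\{xyz\}$), and $\alpha:L\to L$ is $R$-linear, such that for all $x,y,z,u,v\in L$: $\alpha([xy])=[\alpha(x)\alpha(y)]$; $\alpha(\{xyz\})=\{\alpha(x)\alpha(y)\alpha(z)\}$; $[xx]=0$; $\{xxy\}=0$; $\circlearrowleft_{x,y,z}([[xy]\alpha(z)]+\{xyz\})=0$; $\circlearrowleft_{x,y,z}\{[xy]\alpha(z)\alpha(u)\}=0$; $\{\alpha(x)\alpha(y)[uv]\}=[\{xyu\}\alpha^2(v)]+[\alpha^2(u)\{xyv\}]$; $\{\alpha^2(u)\alpha^2(v)\{xyz\}\}=\{\{uvx\}\alpha^2(y)\alpha^2(z)\}+\{\alpha^2(x)\{uvy\}\alpha^2(z)\}+\{\alpha^2(x)\alpha^2(y)\{uvz\}\}$, where $\circlearrowleft_{x,y,z}$ denotes the sum over cyclic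 permutations of $x,y,z$. Cochains: for $n\ge1$, $HomC^n(L,L)$ is the set of $\mathbb{K}$-multilinear maps $f:L^n\to L$ with $f(x_1,\dots,x_n)=0$ whenever $x_{2i-1}=x_{2i}$ for some $i$, and $f(\alpha(x_1),\dots,\alpha(x_n))=\alpha(f(x_1,\dots,x_n))$. For $h\in HomC^1(L,L)$ put $\delta_I^1h(x,y)=[xh(y)]+[h(x)y]-h([xy])$ and $\delta_{II}^1h(x,y,z)=\{h(x)yz\}+\{xh(y)z\}+\{xyh(z)\}-h(\{xyz\})$. For $(f,g)\in HomC^2(L,L)\times HomC^3(L,L)$ put $\delta_I^2(f,g)(x,y,z,u)=\{\alpha(x)\alpha(y)f(z,u)\}-f(\{xyz\},\alpha^2(u))-f(\alpha^2(z),\{xyu\})+g(\alpha(x),\alpha(y),[zu])-[\alpha^2(z)g(x,y,u)]-[g(x,y,z)\alpha^2(u)]$, $\delta_{II}^2 g(x,y,u,v,w)=\{\alpha^2(x)\alpha^2(y)g(u,v,w)\}-\{g(x,y,u)\alpha^2(v)\alpha^2(w)\}-\{\alpha^2(u)g(x,y,v)\alpha^2(w)\}-\{\alpha^2(u)\alpha^2(v)g(x,y,w)\}+g(\alpha^2(x),\alpha^2(y),\{uvw\})-g(\{xyu\},\alpha^2(v),\alpha^2(w))-g(\alpha^2(u),\{xyv\},\alpha^2(w))-g(\alpha^2(u),\alpha^2(v),\{xyw\})$, $d_I^2(f,g)(x,y,z)=\circlearrowleft_{x,y,z}([f(x,y)\alpha(z)]+f([xy],\alpha(z))+g(x,y,z))$,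 $d_{II}^2(f,g)(x,y,z,u)=\circlearrowleft_{x,y,z}(\{f(x,y)\alpha(z)\alpha(u)\}+g([xy],\alpha(z),\alpha(u)))$. Then $HomZ^2(L,L)\times HomZ^3(L,L)$ is the set of $(f,g)\in HomC^2\times HomC^3$ with $\delta_I^2(f,g)=0$, $\delta_{II}^2g=0$, $d_I^2(f,g)=0$, $d_{II}^2(f,g)=0$; $HomB^2(L,L)\times HomB^3(L,L)=\{(\delta_I^1h,\delta_{II}^1h): h\in HomC^1(L,L)\}$ (contained in the former); and $HomH^2(L,L)\times HomH^3(L,L)=(HomZ^2\times HomZ^3)/(HomB^2\times HomB^3)$. Deformations: $\mathbb{K}$-multilinear maps on $L$ are extended $\mathbb{K}[[t]]$-multilinearly to $L[[t]]$, and $\alpha$ is extended $\mathbb{K}[[t]]$-linearly. A one-parameter formal deformation of $(L,[\cdot,\cdot],\{\cdot,\cdot,\cdot\},\alpha)$ is a pair $f_t=\sum_{i\ge0}f_it^i$, $g_t=\sum_{i\ge0}g_it^i$ with $f_0=[\cdot,\cdot]$, $g_0=\{\cdot,\cdot,\cdot\}$, each $f_i$ $\mathbb{K}$-bilinear on $L$ and each $g_i$ $\mathbb{K}$-trilinear on $L$, such that $(L[[t]],f_t,g_t,\alpha)$ is an HLYA over $\mathbb{K}[[t]]$. Two deformations $(f_t,g_t)$, $(f_t',g_t')$ are equivalent if there is a $\mathbb{K}[[t]]$-linear isomorphism $\Phi_t=\sum_{i\ge0}\phi_it^i$ of $L[[t]]$ (each $\phi_i:L\to L$ $\mathbb{K}$-linear)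 with $\phi_0=\mathrm{id}_L$, $\Phi_t\circ\alpha=\alpha\circ\Phi_t$, $\Phi_t(f_t(x,y))=f_t'(\Phi_t(x),\Phi_t(y))$ and $\Phi_t(g_t(x,y,z))=g_t'(\Phi_t(x),\Phi_t(y),\Phi_t(z))$. A deformation is trivial if it is equivalent to the null deformation $(f_0,g_0)$ (i.e. $f_i=0$, $g_i=0$ for all $i\ge1$). The HLYA is analytically rigid if every one-parameter formal deformation of it is trivial. *)

(* Defs.v *)
From HB Require Import structures.
From mathcomp Require Import all_boot all_order all_algebra.
From mathcomp Require Import boolp functions.
Set Implicit Arguments. Unset Strict Implicit. Unset Printing Implicit Defensive.
Import GRing.Theory.
Local Open Scope ring_scope.

Definition HLYA_identities (V : zmodType) (br : V -> V -> V)
  (tr : V -> V -> V -> V) (al : V -> V) : Prop :=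
  let al2 := fun x => al (al x) in
  (forall x y, al (br x y) = br (al x) (al y)) /\
      (forall x y z, al (tr x y z) = tr (al x) (al y) (al z)) /\
      (forall x, br x x = 0) /\
      (forall x y, tr x x y = 0) /\
      (forall x y z, (br (br x y) (al z) + tr x y z)
                   + (br (br y z) (al x) + tr y z x)
                   + (br (br z x) (al y) + tr z x y) = 0) /\
      (forall x y z u, tr (br x y) (al z) (al u) + tr (br y z) (al x) (al u)
                     + tr (br z x) (al y) (al u) = 0) /\
      (forall x y u v, tr (al x) (al y) (br u v)
                     = br (tr x y u) (al2 v) + br (al2 u) (tr x y v)) /\
      (forall x y z u v, tr (al2 u) (al2 v) (tr x y z)
                     = tr (tr u v x) (al2 y) (al2 z) + tr (al2 x) (tr u v y) (al2 z)
                     + tr (al2 x) (al2 y) (tr u v z)).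

Section Lin.
Variables (K : fieldType) (L : lmodType K).

Definition lin1 (h : L -> L) : Prop :=
  forall (c : K) x y, h (c *: x + y) = c *: h x + h y.

Definition bilin (f : L -> L -> L) : Prop :=
  (forall z, lin1 (f ^~ z)) /\ (forall x, lin1 (f x)).

Definition trilin (g : L -> L -> L -> L) : Prop :=
  (forall y z, lin1 (fun x => g x y z)) /\ (forall x z, lin1 (fun y => g x y z))
  /\ (forall x y, lin1 (g x y)).

Definition HLYA (br : L -> L -> L) (tr : L -> L -> L -> L) (al : L -> L) : Prop :=
  [/\ bilin br, trilin tr, lin1 al & HLYA_identities br tr al].

Definition HomC1 (al : L -> L) (h : L -> L) : Prop :=
  lin1 h /\ (forall x, h (al x) = al (h x)).
Definition HomC2 (al : L -> L) (f : L -> L -> L) : Prop :=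
  [/\ bilin f, (forall x, f x x = 0) & (forall x y, f (al x) (al y) = al (f x y))].
Definition HomC3 (al : L -> L) (g : L -> L -> L -> L) : Prop :=
  [/\ trilin g, (forall x z, g x x z = 0)
    & (forall x y z, g (al x) (al y) (al z) = al (g x y z))].

Variables (br : L -> L -> L) (tr : L -> L -> L -> L) (al : L -> L).
Let al2 x := al (al x).

Definition deltaI1 (h : L -> L) : L -> L -> L :=
  fun x y => br x (h y) + br (h x) y - h (br x y).
Definition deltaII1 (h : L -> L) : L -> L -> L -> L :=
  fun x y z => tr (h x) y z + tr x (h y) z + tr x y (h z) - h (tr x y z).

Definition deltaI2 (f : L -> L -> L) (g : L -> L -> L -> L) x y z u : L :=
  tr (al x) (al y) (f z u) - f (tr x y z) (al2 u) - f (al2 z) (tr x y u)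
  + g (al x) (al y) (br z u) - br (al2 z) (g x y u) - br (g x y z) (al2 u).

Definition deltaII2 (g : L -> L -> L -> L) x y u v w : L :=
  tr (al2 x) (al2 y) (g u v w) - tr (g x y u) (al2 v) (al2 w)
  - tr (al2 u) (g x y v) (al2 w) - tr (al2 u) (al2 v) (g x y w)
  + g (al2 x) (al2 y) (tr u v w) - g (tr x y u) (al2 v) (al2 w)
  - g (al2 u) (tr x y v) (al2 w) - g (al2 u) (al2 v) (tr x y w).

Definition dI2 (f : L -> L -> L) (g : L -> L -> L -> L) x y z : L :=
  (br (f x y) (al z) + f (br x y) (al z) + g x y z)
  + (br (f y z) (al x) + f (br y z) (al x) + g y z x)
  + (br (f z x) (al y) + f (br z x) (al y) + g z x y).

Definition dII2 (f : L -> L -> L) (g : L -> L -> L -> L) x y z u : L :=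
  (tr (f x y) (al z) (al u) + g (br x y) (al z) (al u))
  + (tr (f y z) (al x) (al u) + g (br y z) (al x) (al u))
  + (tr (f z x) (al y) (al u) + g (br z x) (al y) (al u)).

Definition HomZ23 (f : L -> L -> L) (g : L -> L -> L -> L) : Prop :=
  [/\ HomC2 al f, HomC3 al g,
      (forall x y z u, deltaI2 f g x y z u = 0),
      (forall x y u v w, deltaII2 g x y u v w = 0) &
      ((forall x y z, dI2 f g x y z = 0) /\
       (forall x y z u, dII2 f g x y z u = 0))].

Definition HomB23 (f : L -> L -> L) (g : L -> L -> L -> L) : Prop :=
  exists h, [/\ HomC1 al h, f = deltaI1 h & g = deltaII1 h].

(* HomH^2(L,L) x HomH^3(L,L) = 0, i.e. HomZ^2 x HomZ^3 = HomB^2 x HomB^3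
   (the inclusion of coboundaries in cocycles being part of the context). *)
Definition HomH23_zero : Prop :=
  forall f g, HomZ23 f g -> HomB23 f g.

(* ---------- formal power series L[[t]] = nat -> L (coefficients) ---------- *)
(* K[[t]]-multilinear extensions of sequences of K-multilinear maps. *)
Definition ext1 (phi : nat -> L -> L) (a : nat -> L) : nat -> L :=
  fun n => \sum_(i < n.+1) phi i (a (n - i)%N).
Definition ext2 (f : nat -> L -> L -> L) (a b : nat -> L) : nat -> L :=
  fun n => \sum_(i < n.+1) \sum_(j < (n.+1 - i)%N) f i (a j) (b (n - i - j)%N).
Definition ext3 (g : nat -> L -> L -> L -> L) (a b c : nat -> L) : nat -> L :=
  fun n => \sum_(i < n.+1) \sum_(j < (n.+1 - i)%N) \sum_(k < (n.+1 - i - j)%N)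
             g i (a j) (b k) (c (n - i - j - k)%N).
Definition extal (a : nat -> L) : nat -> L := fun n => al (a n).

Definition deformation (f : nat -> L -> L -> L) (g : nat -> L -> L -> L -> L) : Prop :=
  [/\ f 0%N = br, g 0%N = tr, (forall i, bilin (f i)), (forall i, trilin (g i)) &
      HLYA_identities (V := (nat -> L)) (ext2 f) (ext3 g) extal].

Definition equiv_deformations (f : nat -> L -> L -> L) (g : nat -> L -> L -> L -> L)
  (f' : nat -> L -> L -> L) (g' : nat -> L -> L -> L -> L) : Prop :=
  exists phi : nat -> L -> L,
    [/\ (forall i, lin1 (phi i)) /\ phi 0%N = id,
        bijective (ext1 phi),
        (forall a, ext1 phi (extal a) = extal (ext1 phi a)),
        (forall a b, ext1 phi (ext2 f a b) = ext2 f' (ext1 phi a) (ext1 phi b)) &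
        (forall a b c, ext1 phi (ext3 g a b c)
                       = ext3 g' (ext1 phi a) (ext1 phi b) (ext1 phi c))].

Definition null_f : nat -> L -> L -> L :=
  fun i => if i is 0%N then br else fun _ _ => 0.
Definition null_g : nat -> L -> L -> L -> L :=
  fun i => if i is 0%N then tr else fun _ _ _ => 0.

Definition trivial_deformation f g : Prop := equiv_deformations f g null_f null_g.

Definition analytically_rigid : Prop :=
  forall f g, deformation f g -> trivial_deformation f g.

End Lin.

(* Main.v *)
From HB Require Import structures.
Require Import Defs.
From mathcomp Require Import all_boot all_order all_algebra.
From mathcomp Require Import boolp functions.
From Stdlib Require Import ClassicalEpsilon.
Set Implicit Arguments. Unset Strict Implicit. Unset Printing Implicit Defensive.
Import GRing.Theory.
Local Open Scope ring_scope.


Section Basic.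
Variables (K : fieldType) (L : lmodType K).
Local Notation S := (nat -> L).

Lemma lin1_D (h : L -> L) : lin1 h -> forall x y, h (x + y) = h x + h y.
Proof. by move=> H x y; have := H 1 x y; rewrite !scale1r. Qed.
Lemma lin1_0 (h : L -> L) : lin1 h -> h 0 = 0.
Proof. move=> H; have E := lin1_D H 0 0; rewrite addr0 in E.
by apply: (addrI (h 0)); rewrite -E addr0. Qed.
Lemma lin1_Z (h : L -> L) : lin1 h -> forall c x, h (c *: x) = c *: h x.
Proof. by move=> H c x; have := H c x 0; rewrite !addr0 lin1_0 // addr0. Qed.
Lemma lin1_N (h : L -> L) : lin1 h -> forall x, h (- x) = - h x.
Proof. by move=> H x; rewrite -scaleN1r lin1_Z // scaleN1r. Qed.
Lemma lin1_B (h : L -> L) : lin1 h -> forall x y, h (x - y) = h x - h y.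
Proof. by move=> H x y; rewrite lin1_D // lin1_N. Qed.
Lemma lin1_sum (h : L -> L) (I : Type) (r : seq I) (P : pred I) (F : I -> L) :
  lin1 h -> h (\sum_(i <- r | P i) F i) = \sum_(i <- r | P i) h (F i).
Proof. by move=> H; apply: (big_morph h (lin1_D H) (lin1_0 H)). Qed.

Definition tri2 (V : zmodType) (n : nat) (F : nat -> nat -> V) : V :=
  \sum_(i < n.+1) F i (n - i)%N.

Lemma tri2_0 (V : zmodType) F : tri2 0 F = F 0%N 0%N :> V.
Proof. by rewrite /tri2 big_ord1. Qed.
Lemma tri2_l (V : zmodType) m F :
  tri2 m.+1 F = F 0%N m.+1 + tri2 m (fun i r => F i.+1 r) :> V.
Proof. by rewrite /tri2 big_ord_recl subn0. Qed.
Lemma tri2_r (V : zmodType) m F :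
  tri2 m.+1 F = tri2 m (fun i r => F i r.+1) + F m.+1 0%N :> V.
Proof.
rewrite /tri2 big_ord_recr /= subnn; congr (_ + _).
by apply: eq_bigr => i _ /=; rewrite subSn // -ltnS.
Qed.
Lemma tri2_last (V : zmodType) n F :
  (forall i, (i < n)%N -> F i (n - i)%N = 0) -> tri2 n F = F n 0%N :> V.
Proof.
move=> H; rewrite /tri2 big_ord_recr /= subnn big1 ?add0r // => i _; exact: H.
Qed.
Lemma tri2_first (V : zmodType) n F :
  (forall i, (0 < i <= n)%N -> F i (n - i)%N = 0) -> tri2 n F = F 0%N n :> V.
Proof.
move=> H; rewrite /tri2 big_ord_recl /= subn0 big1 ?addr0 // => i _.
by apply: H; rewrite /= ltn_ord.
Qed.
Lemma tri2_mid (V : zmodType) N F : (0 < N)%N ->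
  (forall i r, (0 < i < N)%N -> F i r = 0) -> tri2 N F = F 0%N N + F N 0%N :> V.
Proof.
case: N => // M _ H; rewrite tri2_l; congr (_ + _).
by rewrite (tri2_last (n:=M)) // => i iM; apply: H.
Qed.
Lemma tri2_lin (V : lmodType K) n c (F G : nat -> nat -> V) :
  tri2 n (fun i r => c *: F i r + G i r) = c *: tri2 n F + tri2 n G.
Proof. by rewrite /tri2 big_split /= scaler_sumr. Qed.
Lemma tri2_eq (V : zmodType) n (F G : nat -> nat -> V) :
  (forall i r, (i <= n)%N -> (r <= n)%N -> F i r = G i r) -> tri2 n F = tri2 n G.
Proof. by move=> H; apply: eq_bigr => i _; apply: H; rewrite ?leq_subr // -ltnS. Qed.
Lemma tri2_0f (V : zmodType) n : tri2 n (fun _ _ => 0) = 0 :> V.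
Proof. by rewrite /tri2 big1. Qed.

Definition hat (x : L) : S := fun n => if n is 0%N then x else 0.
Definition sh (a : S) : S := fun n => if n is m.+1 then a m else 0.
Definition tl (a : S) : S := fun n => a n.+1.
Definition lc (c : K) (a b : S) : S := fun n => c *: a n + b n.

Lemma decomp (a : S) : a = lc 1 (hat (a 0%N)) (sh (tl a)).
Proof. by apply: funext => -[|n]; rewrite /lc /= scale1r ?addr0 ?add0r. Qed.
Lemma hat_lc c x y : hat (c *: x + y) = lc c (hat x) (hat y).
Proof. by apply: funext => -[|n]; rewrite /lc /= ?scaler0 ?addr0. Qed.

Record Good1 (U : S -> S) : Prop := G1 {
  g1l : forall c a b, U (lc c a b) = lc c (U a) (U b);
  g1s : forall a, U (sh a) = sh (U a) }.
Record Good2 (T : S -> S -> S) : Prop := G2 {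
  g2l1 : forall c a a' b, T (lc c a a') b = lc c (T a b) (T a' b);
  g2s1 : forall a b, T (sh a) b = sh (T a b);
  g2l2 : forall c a b b', T a (lc c b b') = lc c (T a b) (T a b');
  g2s2 : forall a b, T a (sh b) = sh (T a b) }.
Record Good3 (T : S -> S -> S -> S) : Prop := G3 {
  g3l1 : forall c a a' b d, T (lc c a a') b d = lc c (T a b d) (T a' b d);
  g3s1 : forall a b d, T (sh a) b d = sh (T a b d);
  g3l2 : forall c a b b' d, T a (lc c b b') d = lc c (T a b d) (T a b' d);
  g3s2 : forall a b d, T a (sh b) d = sh (T a b d);
  g3l3 : forall c a b d d', T a b (lc c d d') = lc c (T a b d) (T a b d');
  g3s3 : forall a b d, T a b (sh d) = sh (T a b d) }.

Lemma uniq1 U U' : Good1 U -> Good1 U' ->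
  (forall x n, U (hat x) n = U' (hat x) n) -> U = U'.
Proof.
move=> [l s] [l' s'] H; apply: funext => a; apply: funext => n.
elim: n a => [|n IH] a; rewrite (decomp a) l l' s s' /lc /= ?H //.
by rewrite IH.
Qed.

Lemma uniq2 T T' : Good2 T -> Good2 T' ->
  (forall x y n, T (hat x) (hat y) n = T' (hat x) (hat y) n) -> T = T'.
Proof.
move=> [l1 s1 l2 s2] [l1' s1' l2' s2'] H.
apply: funext => a; apply: funext => b; apply: funext => n.
elim: n a b => [|n IH] a b.
  rewrite (decomp a) l1 l1' s1 s1' /lc /=; congr (_ *: _ + _).
  by rewrite (decomp b) l2 l2' s2 s2' /lc /= H.
rewrite (decomp a) l1 l1' s1 s1' /lc /= IH; congr (_ *: _ + _).
by rewrite (decomp b) l2 l2' s2 s2' /lc /= H IH.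
Qed.

Lemma uniq3 T T' : Good3 T -> Good3 T' ->
  (forall x y z n, T (hat x) (hat y) (hat z) n = T' (hat x) (hat y) (hat z) n) -> T = T'.
Proof.
move=> [l1 s1 l2 s2 l3 s3] [l1' s1' l2' s2' l3' s3'] H.
apply: funext => a; apply: funext => b; apply: funext => d; apply: funext => n.
elim: n a b d => [|n IH] a b d.
  rewrite (decomp a) l1 l1' s1 s1' /lc /=; congr (_ *: _ + _).
  rewrite (decomp b) l2 l2' s2 s2' /lc /=; congr (_ *: _ + _).
  by rewrite (decomp d) l3 l3' s3 s3' /lc /= H.
rewrite (decomp a) l1 l1' s1 s1' /lc /= IH; congr (_ *: _ + _).
rewrite (decomp b) l2 l2' s2 s2' /lc /= IH; congr (_ *: _ + _).
by rewrite (decomp d) l3 l3' s3 s3' /lc /= H IH.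
Qed.

End Basic.


Section Ext.
Variables (K : fieldType) (L : lmodType K).
Local Notation S := (nat -> L).

Lemma tri2_ext (V : zmodType) n (F G : nat -> nat -> V) :
  (forall i r, F i r = G i r) -> tri2 n F = tri2 n G.
Proof. by move=> H; apply: eq_bigr => i _; apply: H. Qed.

Definition LinF1 (phi : nat -> L -> L) := forall i, lin1 (phi i).
Definition LinF2 (f : nat -> L -> L -> L) := forall i, bilin (f i).
Definition LinF3 (g : nat -> L -> L -> L -> L) := forall i, trilin (g i).

Lemma bil0l (f : L -> L -> L) : bilin f -> forall y, f 0 y = 0.
Proof. by move=> [H _] y; apply: (lin1_0 (H y)). Qed.
Lemma bil0r (f : L -> L -> L) : bilin f -> forall x, f x 0 = 0.
Proof. by move=> [_ H] x; apply: (lin1_0 (H x)). Qed.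
Lemma tril01 (g : L -> L -> L -> L) : trilin g -> forall y z, g 0 y z = 0.
Proof. by move=> [H _] y z; apply: (lin1_0 (H y z)). Qed.
Lemma tril02 (g : L -> L -> L -> L) : trilin g -> forall x z, g x 0 z = 0.
Proof. by move=> [_ [H _]] x z; apply: (lin1_0 (H x z)). Qed.
Lemma tril03 (g : L -> L -> L -> L) : trilin g -> forall x y, g x y 0 = 0.
Proof. by move=> [_ [_ H]] x y; apply: (lin1_0 (H x y)). Qed.

Lemma ext1E phi (a : S) n : ext1 phi a n = tri2 n (fun i r => phi i (a r)).
Proof. by []. Qed.
Lemma ext2E f (a b : S) n :
  ext2 f a b n = tri2 n (fun i r => tri2 r (fun j s => f i (a j) (b s))).
Proof. by apply: eq_bigr => i _; rewrite subSn // -ltnS. Qed.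
Lemma ext3E g (a b c : S) n :
  ext3 g a b c n = tri2 n (fun i r => tri2 r (fun j s => tri2 s (fun k t =>
     g i (a j) (b k) (c t)))).
Proof.
apply: eq_bigr => i _; rewrite subSn; last by rewrite -ltnS.
by apply: eq_bigr => j _; rewrite subSn // -ltnS.
Qed.

Lemma ext1_good phi : LinF1 phi -> Good1 (ext1 phi).
Proof.
move=> H; split.
  move=> c a b; apply: funext => n; rewrite /lc !ext1E -tri2_lin.
  by apply: tri2_ext => i r; apply: H.
move=> a; apply: funext => -[|n]; rewrite !ext1E.
  by rewrite tri2_0 /= lin1_0.
by rewrite tri2_r /= lin1_0 // addr0.
Qed.

Lemma ext2_good f : LinF2 f -> Good2 (ext2 f).
Proof.
move=> H; split.
- move=> c a a' b; apply: funext => n; rewrite /lc !ext2E -tri2_lin.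
  apply: tri2_ext => i r; rewrite -tri2_lin; apply: tri2_ext => j s.
  by case: (H i) => H1 _; exact: (H1 (b s) c (a j) (a' j)).
- move=> a b; apply: funext => -[|n]; rewrite !ext2E.
    by rewrite !tri2_0 /= bil0l.
  rewrite tri2_r tri2_0 /= bil0l // addr0 ext2E.
  by apply: tri2_ext => i r; rewrite tri2_l /= bil0l // add0r.
- move=> c a b b'; apply: funext => n; rewrite /lc !ext2E -tri2_lin.
  apply: tri2_ext => i r; rewrite -tri2_lin; apply: tri2_ext => j s.
  by case: (H i) => _ H1; exact: (H1 (a j) c (b s) (b' s)).
- move=> a b; apply: funext => -[|n]; rewrite !ext2E.
    by rewrite !tri2_0 /= bil0r.
  rewrite tri2_r tri2_0 /= bil0r // addr0 ext2E.
  by apply: tri2_ext => i r; rewrite tri2_r /= bil0r // addr0.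
Qed.

Lemma ext3_good g : LinF3 g -> Good3 (ext3 g).
Proof.
move=> H; split.
- move=> c a a' b d; apply: funext => n; rewrite /lc !ext3E -tri2_lin.
  apply: tri2_ext => i r; rewrite -tri2_lin; apply: tri2_ext => j s.
  rewrite -tri2_lin; apply: tri2_ext => k t.
  by case: (H i) => H1 _; exact: (H1 (b k) (d t) c (a j) (a' j)).
- move=> a b d; apply: funext => -[|n]; rewrite !ext3E.
    by rewrite !tri2_0 /= tril01.
  rewrite tri2_r !tri2_0 /= tril01 // addr0 ext3E.
  apply: tri2_ext => i r; rewrite tri2_l /= (@tri2_ext _ _ _ (fun _ _ => 0)) ?tri2_0f ?add0r //.
  by move=> k t; rewrite tril01.
- move=> c a b b' d; apply: funext => n; rewrite /lc !ext3E -tri2_lin.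
  apply: tri2_ext => i r; rewrite -tri2_lin; apply: tri2_ext => j s.
  rewrite -tri2_lin; apply: tri2_ext => k t.
  by case: (H i) => _ [H1 _]; exact: (H1 (a j) (d t) c (b k) (b' k)).
- move=> a b d; apply: funext => -[|n]; rewrite !ext3E.
    by rewrite !tri2_0 /= tril02.
  rewrite tri2_r !tri2_0 /= tril02 // addr0 ext3E.
  apply: tri2_ext => i r; rewrite tri2_r tri2_0 /= tril02 // addr0.
  by apply: tri2_ext => j s; rewrite tri2_l /= tril02 // add0r.
- move=> c a b d d'; apply: funext => n; rewrite /lc !ext3E -tri2_lin.
  apply: tri2_ext => i r; rewrite -tri2_lin; apply: tri2_ext => j s.
  rewrite -tri2_lin; apply: tri2_ext => k t.
  by case: (H i) => _ [_ H1]; exact: (H1 (a j) (b k) c (d t) (d' t)).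
- move=> a b d; apply: funext => -[|n]; rewrite !ext3E.
    by rewrite !tri2_0 /= tril03.
  rewrite tri2_r !tri2_0 /= tril03 // addr0 ext3E.
  apply: tri2_ext => i r; rewrite tri2_r tri2_0 /= tril03 // addr0.
  by apply: tri2_ext => j s; rewrite tri2_r /= tril03 // addr0.
Qed.

End Ext.


Section Eval.
Variables (K : fieldType) (L : lmodType K).
Local Notation S := (nat -> L).

Lemma tri2_z (V : zmodType) n (F : nat -> nat -> V) :
  (forall i r, F i r = 0) -> tri2 n F = 0.
Proof. by move=> H; rewrite (@tri2_ext _ _ _ (fun _ _ => 0)) ?tri2_0f. Qed.

Lemma hat_pos (x : L) n : (0 < n)%N -> hat x n = 0.
Proof. by case: n. Qed.

Lemma ext1_hat (phi : nat -> L -> L) x n : LinF1 phi -> ext1 phi (hat x) n = phi n x.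
Proof.
move=> H; rewrite ext1E tri2_last // => i lt; rewrite hat_pos ?lin1_0 //.
by rewrite subn_gt0.
Qed.

Lemma ext2_hr (f : nat -> L -> L -> L) u z n : LinF2 f ->
  ext2 f u (hat z) n = tri2 n (fun i r => f i (u r) z).
Proof.
move=> H; rewrite ext2E; apply: tri2_ext => i r.
rewrite tri2_last // => j lt; rewrite hat_pos ?bil0r //; by rewrite subn_gt0.
Qed.
Lemma ext2_hl (f : nat -> L -> L -> L) u z n : LinF2 f ->
  ext2 f (hat z) u n = tri2 n (fun i r => f i z (u r)).
Proof.
move=> H; rewrite ext2E; apply: tri2_ext => i r.
by rewrite tri2_first // => j /andP[j0 _]; rewrite hat_pos ?bil0l.
Qed.
Lemma ext2_hh (f : nat -> L -> L -> L) x y : LinF2 f ->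
  ext2 f (hat x) (hat y) = fun n => f n x y.
Proof.
move=> H; apply: funext => n; rewrite ext2_hr // tri2_last // => i lt.
by rewrite hat_pos ?bil0l // subn_gt0.
Qed.

Lemma ext3_h23 (g : nat -> L -> L -> L -> L) u y z n : LinF3 g ->
  ext3 g u (hat y) (hat z) n = tri2 n (fun i r => g i (u r) y z).
Proof.
move=> H; rewrite ext3E; apply: tri2_ext => i r.
rewrite (@tri2_ext _ _ _ (fun j s => g i (u j) y (hat z s))); last first.
  by move=> j s; rewrite tri2_first // => k /andP[k0 _]; rewrite hat_pos ?tril02.
by rewrite tri2_last // => j lt; rewrite hat_pos ?tril03 // subn_gt0.
Qed.
Lemma ext3_h13 (g : nat -> L -> L -> L -> L) u x z n : LinF3 g ->
  ext3 g (hat x) u (hat z) n = tri2 n (fun i r => g i x (u r) z).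
Proof.
move=> H; rewrite ext3E; apply: tri2_ext => i r.
rewrite tri2_first; last first.
  by move=> j /andP[j0 _]; apply: tri2_z => k t; rewrite hat_pos ?tril01.
by rewrite tri2_last // => j lt; rewrite (@hat_pos z (r - j)) ?tril03 // subn_gt0.
Qed.
Lemma ext3_h12 (g : nat -> L -> L -> L -> L) u x y n : LinF3 g ->
  ext3 g (hat x) (hat y) u n = tri2 n (fun i r => g i x y (u r)).
Proof.
move=> H; rewrite ext3E; apply: tri2_ext => i r.
rewrite tri2_first; last first.
  by move=> j /andP[j0 _]; apply: tri2_z => k t; rewrite hat_pos ?tril01.
by rewrite tri2_first // => k /andP[k0 _]; rewrite (@hat_pos y k) ?tril02.
Qed.
Lemma ext3_hhh (g : nat -> L -> L -> L -> L) x y z : LinF3 g ->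
  ext3 g (hat x) (hat y) (hat z) = fun n => g n x y z.
Proof.
move=> H; apply: funext => n; rewrite ext3_h23 // tri2_last // => i lt.
by rewrite hat_pos ?tril01 // subn_gt0.
Qed.

Lemma ext1_0 phi (a : S) : ext1 phi a 0 = phi 0%N (a 0%N).
Proof. by rewrite ext1E tri2_0. Qed.
Lemma ext2_0 f (a b : S) : ext2 f a b 0 = f 0%N (a 0%N) (b 0%N).
Proof. by rewrite ext2E !tri2_0. Qed.
Lemma ext3_0 g (a b c : S) : ext3 g a b c 0 = g 0%N (a 0%N) (b 0%N) (c 0%N).
Proof. by rewrite ext3E !tri2_0. Qed.

Lemma ext1_famloc phi phi' (a : S) n :
  (forall i x, (i <= n)%N -> phi i x = phi' i x) -> ext1 phi a n = ext1 phi' a n.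
Proof. by move=> H; rewrite !ext1E; apply: tri2_eq => i r ilt _; apply: H. Qed.
Lemma ext2_famloc f f' (a b : S) n :
  (forall i x y, (i <= n)%N -> f i x y = f' i x y) -> ext2 f a b n = ext2 f' a b n.
Proof.
move=> H; rewrite !ext2E; apply: tri2_eq => i r ilt _.
by apply: tri2_ext => j s; apply: H.
Qed.
Lemma ext3_famloc g g' (a b c : S) n :
  (forall i x y z, (i <= n)%N -> g i x y z = g' i x y z) ->
  ext3 g a b c n = ext3 g' a b c n.
Proof.
move=> H; rewrite !ext3E; apply: tri2_eq => i r ilt _.
by apply: tri2_ext => j s; apply: tri2_ext => k t; apply: H.
Qed.
Lemma ext2_argloc f (a b a' b' : S) n :
  (forall m, (m <= n)%N -> a m = a' m /\ b m = b' m) -> ext2 f a b n = ext2 f a' b' n.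
Proof.
move=> H; rewrite !ext2E; apply: tri2_eq => i r _ rn.
apply: tri2_eq => j s jr sr.
by case: (H j (leq_trans jr rn)) => -> _; case: (H s (leq_trans sr rn)) => _ ->.
Qed.
Lemma ext3_argloc g (a b c a' b' c' : S) n :
  (forall m, (m <= n)%N -> [/\ a m = a' m, b m = b' m & c m = c' m]) ->
  ext3 g a b c n = ext3 g a' b' c' n.
Proof.
move=> H; rewrite !ext3E; apply: tri2_eq => i r _ rn.
apply: tri2_eq => j s jr sr; apply: tri2_eq => k t ks ts.
case: (H j (leq_trans jr rn)) => -> _ _.
case: (H k (leq_trans ks (leq_trans sr rn))) => _ -> _.
by case: (H t (leq_trans ts (leq_trans sr rn))) => _ _ ->.
Qed.

Lemma iter_sh k (w : S) n :
  iter k (@sh _ L) w n = if (k <= n)%N then w (n - k)%N else 0.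
Proof.
elim: k n => [|k IH] n /=; first by rewrite subn0.
case: n => [|n] //=; rewrite IH ltnS; case: ifP => // _; by rewrite subSS.
Qed.
Lemma g1_iter (U : S -> S) k a : Good1 U -> U (iter k (@sh _ L) a) = iter k (@sh _ L) (U a).
Proof. by move=> G; elim: k => //= k IH; rewrite (g1s G) IH. Qed.
Lemma g2_iter1 (T : S -> S -> S) k a b : Good2 T ->
  T (iter k (@sh _ L) a) b = iter k (@sh _ L) (T a b).
Proof. by move=> G; elim: k => //= k IH; rewrite (g2s1 G) IH. Qed.
Lemma g2_iter2 (T : S -> S -> S) k a b : Good2 T ->
  T a (iter k (@sh _ L) b) = iter k (@sh _ L) (T a b).
Proof. by move=> G; elim: k => //= k IH; rewrite (g2s2 G) IH. Qed.
Lemma g3_iter1 (T : S -> S -> S -> S) k a b c : Good3 T ->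
  T (iter k (@sh _ L) a) b c = iter k (@sh _ L) (T a b c).
Proof. by move=> G; elim: k => //= k IH; rewrite (g3s1 G) IH. Qed.
Lemma g3_iter2 (T : S -> S -> S -> S) k a b c : Good3 T ->
  T a (iter k (@sh _ L) b) c = iter k (@sh _ L) (T a b c).
Proof. by move=> G; elim: k => //= k IH; rewrite (g3s2 G) IH. Qed.
Lemma g3_iter3 (T : S -> S -> S -> S) k a b c : Good3 T ->
  T a b (iter k (@sh _ L) c) = iter k (@sh _ L) (T a b c).
Proof. by move=> G; elim: k => //= k IH; rewrite (g3s3 G) IH. Qed.

Lemma good11 (U V : S -> S) : Good1 U -> Good1 V -> Good1 (fun a => U (V a)).
Proof. by move=> [l s] [l' s']; split=> *; rewrite ?l' ?l ?s' ?s. Qed.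
Lemma good2c (T : S -> S -> S) (P Q : S -> S) : Good2 T -> Good1 P -> Good1 Q ->
  Good2 (fun a b => P (T (Q a) (Q b))).
Proof.
move=> [l1 s1 l2 s2] [lp sp] [lq sq].
by split=> *; rewrite ?lq ?sq ?l1 ?s1 ?l2 ?s2 ?lp ?sp.
Qed.
Lemma good3c (T : S -> S -> S -> S) (P Q : S -> S) : Good3 T -> Good1 P -> Good1 Q ->
  Good3 (fun a b c => P (T (Q a) (Q b) (Q c))).
Proof.
move=> [l1 s1 l2 s2 l3 s3] [lp sp] [lq sq].
by split=> *; rewrite ?lq ?sq ?l1 ?s1 ?l2 ?s2 ?l3 ?s3 ?lp ?sp.
Qed.

End Eval.


Section Grp. Variable V : zmodType.
Lemma grp7 (A B C D E F : V) : A + B = (C + D) + (E + F) -> A - D - F + B - E - C = 0.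
Proof.
move=> H; apply/eqP; rewrite -(subrr (A + B)) {2}H.
rewrite !opprD !addrA; apply/eqP.
rewrite (addrAC _ (- F) B) (addrAC _ (-D) B).
rewrite (addrAC _ (-E) (-C)) (addrAC _ (-F) (-C)) (addrAC _ (-D) (-C)).
by rewrite (addrAC _ (-F) (-E)).
Qed.
Lemma grp8 (A B C D E F G H : V) : A + B = (C + D) + (E + F) + (G + H) ->
  A - C - E - G + B - D - F - H = 0.
Proof.
move=> HH; apply/eqP; rewrite -(subrr (A + B)) {2}HH.
rewrite !opprD !addrA; apply/eqP.
rewrite (addrAC _ (-G) B) (addrAC _ (-E) B) (addrAC _ (-C) B).
by rewrite (addrAC _ (-G) (-D)) (addrAC _ (-E) (-D)) (addrAC _ (-G) (-F)).
Qed.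
End Grp.

Section Lowest.
Variables (K : fieldType) (L : lmodType K).
Local Notation S := (nat -> L).
Variables (br : L -> L -> L) (tr : L -> L -> L -> L) (al : L -> L).
Hypothesis Hal : lin1 al.

Lemma extal_hat x : extal al (hat x) = hat (al x).
Proof. by apply: funext => -[|n]; rewrite /extal /= ?lin1_0. Qed.

Lemma fct0 (n : nat) : (0 : S) n = 0. Proof. by []. Qed.
Lemma fctD (u v : S) (n : nat) : (u + v) n = u n + v n. Proof. by []. Qed.

Variables (f : nat -> L -> L -> L) (g : nat -> L -> L -> L -> L) (N : nat).
Hypotheses (Hf : LinF2 f) (Hg : LinF3 g) (Hf0 : forall x y, f 0%N x y = br x y)
  (Hg0 : forall x y z, g 0%N x y z = tr x y z) (HN : (0 < N)%N)
  (Hfz : forall i, (0 < i < N)%N -> forall x y, f i x y = 0)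
  (Hgz : forall i, (0 < i < N)%N -> forall x y z, g i x y z = 0).

Lemma L2r u z : ext2 f u (hat z) N = br (u N) z + f N (u 0%N) z.
Proof. by rewrite ext2_hr // tri2_mid // ?Hf0 // => i r /Hfz ->. Qed.
Lemma L2l u z : ext2 f (hat z) u N = br z (u N) + f N z (u 0%N).
Proof. by rewrite ext2_hl // tri2_mid // ?Hf0 // => i r /Hfz ->. Qed.
Lemma L3a u y z : ext3 g u (hat y) (hat z) N = tr (u N) y z + g N (u 0%N) y z.
Proof. by rewrite ext3_h23 // tri2_mid // ?Hg0 // => i r /Hgz ->. Qed.
Lemma L3b u x z : ext3 g (hat x) u (hat z) N = tr x (u N) z + g N x (u 0%N) z.
Proof. by rewrite ext3_h13 // tri2_mid // ?Hg0 // => i r /Hgz ->. Qed.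
Lemma L3c u x y : ext3 g (hat x) (hat y) u N = tr x y (u N) + g N x y (u 0%N).
Proof. by rewrite ext3_h12 // tri2_mid // ?Hg0 // => i r /Hgz ->. Qed.

Lemma E2hh x y : ext2 f (hat x) (hat y) = fun n => f n x y.
Proof. exact: ext2_hh. Qed.
Lemma E3hhh x y z : ext3 g (hat x) (hat y) (hat z) = fun n => g n x y z.
Proof. exact: ext3_hhh. Qed.

Hypothesis Hid : HLYA_identities (ext2 f) (ext3 g) (extal al).

Lemma lowest : HomZ23 br tr al (f N) (g N).
Proof.
case: Hid => h1 [h2 [h3 [h4 [h5 [h6 [h7 h8]]]]]].
split.
- split; first exact: (Hf N).
  + move=> x; have := congr1 (fun u => u N) (h3 (hat x)).
    by rewrite /= E2hh.
  + move=> x y; have := congr1 (fun u => u N) (h1 (hat x) (hat y)).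
    by rewrite /= !extal_hat !E2hh /= => Heq; rewrite -Heq.
- split; first exact: (Hg N).
  + move=> x z; have := congr1 (fun u => u N) (h4 (hat x) (hat z)).
    by rewrite /= E3hhh.
  + move=> x y z; have := congr1 (fun u => u N) (h2 (hat x) (hat y) (hat z)).
    by rewrite /= !extal_hat !E3hhh /= => Heq; rewrite -Heq.
- move=> x y z u; have := congr1 (fun w => w N) (h7 (hat x) (hat y) (hat z) (hat u)).
  rewrite /= !extal_hat !E2hh !E3hhh L3c !fctD L2r L2l /= !Hf0 !Hg0.
  move/grp7; by rewrite /deltaI2.
- move=> x y u v w.
  have := congr1 (fun t => t N) (h8 (hat u) (hat v) (hat w) (hat x) (hat y)).
  rewrite /= !extal_hat !E3hhh !fctD !L3c L3a L3b /= !Hg0.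
  move/grp8; by rewrite /deltaII2.
- split.
  + move=> x y z; have := congr1 (fun t => t N) (h5 (hat x) (hat y) (hat z)).
    rewrite /= !extal_hat !E2hh !E3hhh !fctD !L2r /= !Hf0.
    by rewrite /dI2.
  + move=> x y z u; have := congr1 (fun t => t N) (h6 (hat x) (hat y) (hat z) (hat u)).
    rewrite /= !extal_hat !E2hh !fctD !L3a /= !Hf0.
    by rewrite /dII2.
Qed.
End Lowest.


Lemma sum_widen (V : zmodType) m n (F : nat -> V) : (m <= n)%N ->
  (forall k, (m <= k < n)%N -> F k = 0) ->
  \sum_(k < m) F k = \sum_(k < n) F k.
Proof.
elim: n => [|n IH]; first by rewrite leqn0 => /eqP ->.
rewrite leq_eqVlt => /orP[/eqP -> //|mn H].
rewrite big_ord_recr /= H ?addr0; last by rewrite -ltnS mn ltnSn.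
apply: IH => [|k /andP[mk kn]]; first by rewrite -ltnS.
by apply: H; rewrite mk ltnW.
Qed.

Section Inverse.
Variables (K : fieldType) (L : lmodType K).
Local Notation S := (nat -> L).

Lemma lc1 (u v : S) : (fun m => u m + v m) = lc 1 u v.
Proof. by apply: funext => m; rewrite /lc scale1r. Qed.

Lemma good_add (U : S -> S) u v : Good1 U ->
  U (fun m => u m + v m) = fun m => U u m + U v m.
Proof. by move=> G; rewrite lc1 (g1l G) -lc1. Qed.

Lemma good_inj (U : S -> S) u v : Good1 U -> U u = U v -> u = v.
Abort.

Variables (phi : nat -> L -> L).
Hypotheses (Hphi : LinF1 phi) (Hphi0 : forall x, phi 0%N x = x).
Local Notation P := (ext1 phi).
Let GP := ext1_good Hphi.

Definition Dm (a : S) : S := fun n => a n - P a n.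

Lemma Dform a n : Dm a n = - \sum_(i < n) phi i.+1 (a (n - i.+1)%N).
Proof.
rewrite /Dm ext1E /tri2 big_ord_recl /= subn0 Hphi0 opprD addrA subrr add0r.
by [].
Qed.

Lemma Dloc a b n : (forall m, (m < n)%N -> a m = b m) -> Dm a n = Dm b n.
Proof.
move=> H; rewrite !Dform; congr (- _); apply: eq_bigr => i _; rewrite H //.
by rewrite ltn_subrL /= (leq_ltn_trans _ (ltn_ord i)).
Qed.

Lemma Dzero n : Dm (fun _ => 0) n = 0.
Proof. by rewrite Dform big1 ?oppr0 // => i _; rewrite lin1_0. Qed.

Lemma Dadd u v n : Dm (fun m => u m + v m) n = Dm u n + Dm v n.
Proof. by rewrite /Dm good_add // opprD addrACA. Qed.

Definition Dk k a := iter k Dm a.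

Lemma Dk_low k a n : (n < k)%N -> Dk k a n = 0.
Proof.
elim: k n => // k IH n nk /=.
rewrite (@Dloc _ (fun _ => 0)) ?Dzero // => m mn; apply: IH.
by rewrite (leq_trans mn) // -ltnS.
Qed.

Definition Psi (a : S) : S := fun n => \sum_(k < n.+1) Dk k a n.
Definition Sk (a : S) N : S := fun m => \sum_(k < N) Dk k a m.

Lemma D_Sk a N n : Dm (Sk a N) n = \sum_(k < N) Dk k.+1 a n.
Proof.
elim: N n => [|N IH] n.
  rewrite big_ord0 (@Dloc _ (fun _ => 0)) ?Dzero // => m _.
  by rewrite /Sk big_ord0.
have -> : Sk a N.+1 = fun m => Sk a N m + Dk N a m.
  by apply: funext => m; rewrite /Sk big_ord_recr.
by rewrite Dadd IH big_ord_recr.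
Qed.

Lemma PPsi a : P (Psi a) = a.
Proof.
apply: funext => n.
have E : P (Psi a) n = Psi a n - Dm (Psi a) n by rewrite /Dm opprB addrC subrK.
rewrite E (@Dloc _ (Sk a n.+1)); last first.
  move=> m mn; rewrite /Psi /Sk; apply: (@sum_widen _ m.+1 n.+1 (fun k => Dk k a m)) => [|k /andP[mk kn]].
    by rewrite ltnS ltnW.
  by apply: Dk_low.
have Z : Dm (Dk n a) n = 0 := Dk_low a (ltnSn n).
rewrite D_Sk big_ord_recr /= Z addr0 /Psi big_ord_recl /=.
by rewrite addrK.
Qed.

Lemma P_inj u v : P u = P v -> u = v.
Proof.
move=> E; set w := lc (-1) v u.
have Pw : forall n, P w n = 0.
  by move=> n; rewrite (g1l GP) E /lc scaleN1r addNr.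
have Dw : forall k, Dk k w = w.
  elim=> // k IH /=; rewrite IH; apply: funext => n; by rewrite /Dm Pw subr0.
apply: funext => n; have := Dk_low w (ltnSn n); rewrite Dw /w /lc scaleN1r.
by move/eqP; rewrite addrC subr_eq0 => /eqP.
Qed.

Lemma PsiP a : Psi (P a) = a.
Proof. by apply: P_inj; rewrite PPsi. Qed.

Lemma Psi_good : Good1 Psi.
Proof.
split=> [c a b|a]; apply: P_inj; first by rewrite (g1l GP) !PPsi.
by rewrite (g1s GP) !PPsi.
Qed.

Variable al : L -> L.
Hypotheses (Hal : lin1 al) (Hphial : forall i x, phi i (al x) = al (phi i x)).

Lemma P_al a : P (extal al a) = extal al (P a).
Proof.
apply: funext => n; rewrite /extal !ext1E /tri2 lin1_sum //.
by apply: eq_bigr => i _; rewrite Hphial.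
Qed.

Lemma Psi_al a : Psi (extal al a) = extal al (Psi a).
Proof. by apply: P_inj; rewrite P_al !PPsi. Qed.

End Inverse.


Section Transport.
Variables (K : fieldType) (L : lmodType K).
Local Notation S := (nat -> L).
Variable al : L -> L.

Lemma transport (F : S -> S -> S) (G : S -> S -> S -> S) (P Q : S -> S) :
  (forall a, Q (P a) = a) -> (forall a, P (extal al a) = extal al (P a)) ->
  (forall a, Q (extal al a) = extal al (Q a)) ->
  (forall u v, P (u + v) = P u + P v) -> P 0 = 0 ->
  HLYA_identities F G (extal al) ->
  HLYA_identities (fun a b => P (F (Q a) (Q b)))
                  (fun a b c => P (G (Q a) (Q b) (Q c))) (extal al).
Proof.
move=> QP PA QA PD P0 [h1 [h2 [h3 [h4 [h5 [h6 [h7 h8]]]]]]].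
split; first by move=> x y /=; rewrite !QA -h1 PA.
split; first by move=> x y z /=; rewrite !QA -h2 PA.
split; first by move=> x /=; rewrite h3.
split; first by move=> x y /=; rewrite h4.
split; first by move=> x y z /=; rewrite !QP !QA -!PD h5.
split; first by move=> x y z u /=; rewrite !QP !QA -!PD h6.
split; first by move=> x y u v /=; rewrite !QP !QA -!PD h7.
by move=> x y z u v /=; rewrite !QP !QA -!PD h8.
Qed.

End Transport.


Section Deform.
Variables (K : fieldType) (L : lmodType K).
Local Notation S := (nat -> L).
Variables (br : L -> L -> L) (tr : L -> L -> L -> L) (al : L -> L).
Variables (f : nat -> L -> L -> L) (g : nat -> L -> L -> L -> L).
Hypotheses (Hal : lin1 al) (Hf : LinF2 f) (Hg : LinF3 g)
  (Hf0 : f 0%N = br) (Hg0 : g 0%N = tr)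
  (Hid : HLYA_identities (ext2 f) (ext3 g) (extal al)).

Definition tf (phi : nat -> L -> L) n x y :=
  ext1 phi (ext2 f (Psi phi (hat x)) (Psi phi (hat y))) n.
Definition tg (phi : nat -> L -> L) n x y z :=
  ext1 phi (ext3 g (Psi phi (hat x)) (Psi phi (hat y)) (Psi phi (hat z))) n.

Section Phi.
Variable phi : nat -> L -> L.
Hypotheses (Hphi : LinF1 phi) (Hphi0 : forall x, phi 0%N x = x).
Let GP := ext1_good Hphi.
Let GQ := Psi_good Hphi Hphi0.
Let GF := ext2_good Hf.
Let GG := ext3_good Hg.

Lemma tf_lin : LinF2 (tf phi).
Proof.
move=> n; split=> [z|x] c u v; rewrite /tf hat_lc (g1l GQ).
  by rewrite (g2l1 GF) (g1l GP).
by rewrite (g2l2 GF) (g1l GP).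
Qed.
Lemma tg_lin : LinF3 (tg phi).
Proof.
move=> n; split; [|split] => [y z|x z|x y] c u v; rewrite /tg hat_lc (g1l GQ).
- by rewrite (g3l1 GG) (g1l GP).
- by rewrite (g3l2 GG) (g1l GP).
- by rewrite (g3l3 GG) (g1l GP).
Qed.

Lemma tf_ext : ext2 (tf phi) = fun a b => ext1 phi (ext2 f (Psi phi a) (Psi phi b)).
Proof.
apply: uniq2; first exact: ext2_good tf_lin.
  exact: good2c.
by move=> x y n; rewrite ext2_hh //; exact: tf_lin.
Qed.
Lemma tg_ext : ext3 (tg phi) =
  fun a b c => ext1 phi (ext3 g (Psi phi a) (Psi phi b) (Psi phi c)).
Proof.
apply: uniq3; first exact: ext3_good tg_lin.
  exact: good3c.
by move=> x y z n; rewrite ext3_hhh //; exact: tg_lin.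
Qed.

Lemma Psi_hat0 x : Psi phi (hat x) 0%N = x.
Proof.
have := congr1 (fun u => u 0%N) (PPsi Hphi Hphi0 (hat x)).
by rewrite /= ext1_0 Hphi0.
Qed.

Lemma tf_0 x y : tf phi 0 x y = br x y.
Proof. by rewrite /tf ext1_0 Hphi0 ext2_0 !Psi_hat0 Hf0. Qed.
Lemma tg_0 x y z : tg phi 0 x y z = tr x y z.
Proof. by rewrite /tg ext1_0 Hphi0 ext3_0 !Psi_hat0 Hg0. Qed.

Lemma tf_P a b : ext2 (tf phi) (ext1 phi a) (ext1 phi b) = ext1 phi (ext2 f a b).
Proof. by rewrite tf_ext !PsiP. Qed.
Lemma tg_P a b c : ext3 (tg phi) (ext1 phi a) (ext1 phi b) (ext1 phi c)
  = ext1 phi (ext3 g a b c).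
Proof. by rewrite tg_ext !PsiP. Qed.

Hypothesis Hphial : forall i x, phi i (al x) = al (phi i x).

Lemma t_ids : HLYA_identities (ext2 (tf phi)) (ext3 (tg phi)) (extal al).
Proof.
rewrite tf_ext tg_ext; apply: transport => //.
- exact: PsiP.
- exact: P_al.
- exact: Psi_al.
- by move=> u v; apply: good_add.
- apply/funext => n; rewrite /= ext1E tri2_z // => i r; exact: lin1_0.
Qed.

End Phi.
End Deform.


Section Step.
Variables (K : fieldType) (L : lmodType K).
Local Notation S := (nat -> L).
Variables (br : L -> L -> L) (tr : L -> L -> L -> L) (al : L -> L).
Variables (f : nat -> L -> L -> L) (g : nat -> L -> L -> L -> L).
Hypotheses (Hal : lin1 al) (Hf : LinF2 f) (Hg : LinF3 g)
  (Hf0 : f 0%N = br) (Hg0 : g 0%N = tr)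
  (Hid : HLYA_identities (ext2 f) (ext3 g) (extal al)).

Record Inv (phi : nat -> L -> L) (N : nat) : Prop := MkInv {
  Ilin : LinF1 phi;
  Ial : forall i x, phi i (al x) = al (phi i x);
  I0 : forall x, phi 0%N x = x;
  Ivf : forall i, (0 < i < N)%N -> forall x y, tf f phi i x y = 0;
  Ivg : forall i, (0 < i < N)%N -> forall x y z, tg g phi i x y z = 0 }.

Lemma Inv_cocycle phi N : Inv phi N -> (0 < N)%N ->
  HomZ23 br tr al (tf f phi N) (tg g phi N).
Proof.
move=> [l a z vf vg] HN; apply: lowest => //.
- exact: tf_lin.
- exact: tg_lin.
- by move=> x y; rewrite (tf_0 Hf0).
- by move=> x y w; rewrite (tg_0 Hg0).
- exact: t_ids.
Qed.

Definition plusF (phi : nat -> L -> L) N (h : L -> L) : nat -> L -> L :=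
  fun n x => phi n x + (if (N <= n)%N then h (phi (n - N)%N x) else 0).
Definition Theta N (h : L -> L) (w : S) : S :=
  fun n => w n + (if (N <= n)%N then h (w (n - N)%N) else 0).

Section OneStep.
Variables (phi : nat -> L -> L) (N : nat) (h : L -> L).
Hypotheses (IH : Inv phi N) (HN : (0 < N)%N) (Hh : HomC1 al h)
  (Ef : tf f phi N = deltaI1 br h) (Eg : tg g phi N = deltaII1 tr h).

Let Hphi := Ilin IH.
Let Hphi0 := I0 IH.
Let hl : lin1 h := proj1 Hh.
Local Notation phi' := (plusF phi N h).

Lemma pl_lin : LinF1 phi'.
Proof.
move=> n c x y; rewrite /plusF Hphi; case: ifP => _; last by rewrite !addr0.
by rewrite Hphi hl scalerDr addrACA.
Qed.
Lemma pl_0 x : phi' 0%N x = x.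
Proof. by rewrite /plusF leqNgt HN addr0 Hphi0. Qed.
Lemma pl_al n x : phi' n (al x) = al (phi' n x).
Proof.
rewrite /plusF lin1_D // (Ial IH); case: ifP => _; last by rewrite (lin1_0 Hal).
by rewrite (Ial IH) (proj2 Hh).
Qed.

Lemma Theta_good : Good1 (Theta N h).
Proof.
split=> [c a b|a]; apply: funext => n; rewrite /Theta /lc.
  by case: ifP => _; [rewrite hl scalerDr addrACA | rewrite !addr0].
case: n => [|m] /=; first by rewrite leqNgt HN addr0.
case: (ltngtP N m.+1) => Nm.
- have Nm2 : (N <= m)%N by rewrite -ltnS.
  by rewrite Nm2 subSn.
- by rewrite leqNgt (ltn_trans (ltnSn m) Nm).
- by rewrite Nm subnn ltnn /= (lin1_0 hl).
Qed.

Lemma ext1_pl : ext1 phi' = fun a => Theta N h (ext1 phi a).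
Proof.
apply: uniq1; first exact: ext1_good pl_lin.
  exact: good11 Theta_good (ext1_good Hphi).
by move=> x n; rewrite /Theta !ext1_hat //; exact: pl_lin.
Qed.

Lemma Psi_Theta a : Psi phi' (Theta N h a) = Psi phi a.
Proof.
apply: (P_inj pl_lin pl_0); rewrite PPsi; last exact: pl_0; last exact: pl_lin.
by rewrite ext1_pl /= PPsi.
Qed.

Lemma rel2 a b : ext2 (tf f phi') (Theta N h a) (Theta N h b)
  = Theta N h (ext2 (tf f phi) a b).
Proof.
rewrite (tf_ext Hf pl_lin pl_0) (tf_ext Hf Hphi Hphi0) /= !Psi_Theta ext1_pl.
by [].
Qed.
Lemma rel3 a b c : ext3 (tg g phi') (Theta N h a) (Theta N h b) (Theta N h c)
  = Theta N h (ext3 (tg g phi) a b c).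
Proof.
rewrite (tg_ext Hg pl_lin pl_0) (tg_ext Hg Hphi Hphi0) /= !Psi_Theta ext1_pl.
by [].
Qed.

Lemma Theta_hat x : Theta N h (hat x) = lc 1 (iter N (@sh _ L) (hat (h x))) (hat x).
Proof.
apply: funext => n; rewrite /Theta /lc iter_sh scale1r.
case: ifP => _; last by rewrite add0r addr0.
by rewrite addrC; case: (n - N)%N => //=; rewrite (lin1_0 hl).
Qed.

Lemma pl_vf n : (0 < n < N.+1)%N -> forall x y, tf f phi' n x y = 0.
Proof.
move=> /andP[n0 nN] x y.
have LT := tf_lin Hf pl_lin pl_0.
have GT : Good2 (ext2 (tf f phi')) := ext2_good LT.
have E := congr1 (fun w => w n) (rel2 (hat x) (hat y)).
rewrite /= !Theta_hat (g2l1 GT) !(g2l2 GT) /lc !scale1r in E.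
rewrite !(g2_iter1 _ _ _ GT) !(g2_iter2 _ _ _ GT) !iter_sh /Theta in E.
have LT0 := tf_lin Hf Hphi Hphi0.
rewrite !(ext2_hh _ _ LT) !(ext2_hh _ _ LT0) /= in E.
case: (ltnP n N) => [nlt|nge].
  rewrite leqNgt nlt /= !add0r addr0 in E.
  by rewrite E (Ivf IH) // n0 nlt.
have nE : n = N by apply/eqP; rewrite eqn_leq nge -ltnS nN.
subst n; rewrite leqnn subnn leqNgt HN /= add0r in E.
rewrite !(tf_0 Hf0 pl_lin pl_0) (tf_0 Hf0 Hphi Hphi0) Ef /deltaI1 subrK in E.
rewrite addrA [br x (h y) + _]addrC in E.
by apply: (addrI (br (h x) y + br x (h y))); rewrite addr0 E.
Qed.

Lemma pl_vg n : (0 < n < N.+1)%N -> forall x y z, tg g phi' n x y z = 0.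
Proof.
move=> /andP[n0 nN] x y z.
have LT := tg_lin Hg pl_lin pl_0.
have GT : Good3 (ext3 (tg g phi')) := ext3_good LT.
have E := congr1 (fun w => w n) (rel3 (hat x) (hat y) (hat z)).
rewrite /= !Theta_hat (g3l1 GT) !(g3l2 GT) !(g3l3 GT) /lc !scale1r in E.
rewrite !(g3_iter1 _ _ _ _ GT) !(g3_iter2 _ _ _ _ GT) !(g3_iter3 _ _ _ _ GT) in E.
rewrite !iter_sh /Theta in E.
have LT0 := tg_lin Hg Hphi Hphi0.
rewrite !(ext3_hhh _ _ _ LT) !(ext3_hhh _ _ _ LT0) /= in E.
case: (ltnP n N) => [nlt|nge].
  rewrite leqNgt nlt /= !add0r addr0 in E.
  by rewrite E (Ivg IH) // n0 nlt.
have nE : n = N by apply/eqP; rewrite eqn_leq nge -ltnS nN.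
subst n; rewrite leqnn subnn leqNgt HN /= !add0r ?addr0 in E.
rewrite !(tg_0 Hg0 pl_lin pl_0) (tg_0 Hg0 Hphi Hphi0) Eg /deltaII1 subrK in E.
rewrite !addrA in E.
by apply: (addrI (tr (h x) y z + tr x (h y) z + tr x y (h z))); rewrite addr0 E.
Qed.

Lemma step_inv : Inv phi' N.+1.
Proof.
split.
- exact: pl_lin.
- exact: pl_al.
- exact: pl_0.
- exact: pl_vf.
- exact: pl_vg.
Qed.

End OneStep.
End Step.


Section Final.
Variables (K : fieldType) (L : lmodType K).
Local Notation S := (nat -> L).

Lemma good2_post (T : S -> S -> S) (P : S -> S) : Good2 T -> Good1 P ->
  Good2 (fun a b => P (T a b)).
Proof. by move=> [l1 s1 l2 s2] [lp sp]; split=> *; rewrite ?l1 ?s1 ?l2 ?s2 ?lp ?sp. Qed.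
Lemma good2_pre (T : S -> S -> S) (Q : S -> S) : Good2 T -> Good1 Q ->
  Good2 (fun a b => T (Q a) (Q b)).
Proof. by move=> [l1 s1 l2 s2] [lp sp]; split=> *; rewrite ?lp ?sp ?l1 ?s1 ?l2 ?s2. Qed.
Lemma good3_post (T : S -> S -> S -> S) (P : S -> S) : Good3 T -> Good1 P ->
  Good3 (fun a b c => P (T a b c)).
Proof.
by move=> [l1 s1 l2 s2 l3 s3] [lp sp]; split=> *; rewrite ?l1 ?s1 ?l2 ?s2 ?l3 ?s3 ?lp ?sp.
Qed.
Lemma good3_pre (T : S -> S -> S -> S) (Q : S -> S) : Good3 T -> Good1 Q ->
  Good3 (fun a b c => T (Q a) (Q b) (Q c)).
Proof.
by move=> [l1 s1 l2 s2 l3 s3] [lp sp]; split=> *; rewrite ?lp ?sp ?l1 ?s1 ?l2 ?s2 ?l3 ?s3.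
Qed.

Variables (br : L -> L -> L) (tr : L -> L -> L -> L) (al : L -> L).
Variables (f : nat -> L -> L -> L) (g : nat -> L -> L -> L -> L).
Hypotheses (Hbr : bilin br) (Htr : trilin tr) (Hal : lin1 al) (Hf : LinF2 f) (Hg : LinF3 g)
  (Hf0 : f 0%N = br) (Hg0 : g 0%N = tr)
  (Hid : HLYA_identities (ext2 f) (ext3 g) (extal al))
  (H0 : HomH23_zero br tr al).

Definition idfam : nat -> L -> L := fun i => if i is 0%N then (fun x => x) else (fun _ => 0).

Lemma idfam_inv : Inv al f g idfam 1.
Proof.
split.
- by case=> [|i] c x y //=; rewrite scaler0 addr0.
- by case=> [|i] x //=; rewrite (lin1_0 Hal).
- by [].
- by move=> i /andP[i0 i1]; move: i1; rewrite ltnS leqNgt i0.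
- by move=> i /andP[i0 i1]; move: i1; rewrite ltnS leqNgt i0.
Qed.

Definition hpick (phi : nat -> L -> L) N : L -> L :=
  epsilon (inhabits (fun x => x)) (fun h =>
    [/\ HomC1 al h, tf f phi N = deltaI1 br h & tg g phi N = deltaII1 tr h]).

Lemma hpick_spec phi N : Inv al f g phi N -> (0 < N)%N ->
  [/\ HomC1 al (hpick phi N), tf f phi N = deltaI1 br (hpick phi N)
    & tg g phi N = deltaII1 tr (hpick phi N)].
Proof.
move=> I N0.
have E : exists h, [/\ HomC1 al h, tf f phi N = deltaI1 br h & tg g phi N = deltaII1 tr h].
  exact: (H0 (Inv_cocycle Hal Hf Hg Hf0 Hg0 Hid I N0)).
exact: (epsilon_spec _ _ E).
Qed.

Fixpoint fam (k : nat) : nat -> L -> L :=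
  if k is k'.+1 then plusF (fam k') k (hpick (fam k') k) else idfam.

Lemma fam_inv k : Inv al f g (fam k) k.+1.
Proof.
elim: k => [|k IH]; first exact: idfam_inv.
have [h1 h2 h3] := hpick_spec IH (ltn0Sn k).
exact: (step_inv Hal Hf Hg Hf0 Hg0 IH (ltn0Sn k) h1 h2 h3).
Qed.

Lemma fam_stable k i x : (i <= k)%N -> fam k i x = fam i i x.
Proof.
move=> ik; rewrite -(subnKC ik); elim: (k - i)%N => [|m IH]; first by rewrite addn0.
rewrite addnS /= /plusF IH.
by rewrite leqNgt ltnS leq_addr /= addr0.
Qed.

Definition phiF : nat -> L -> L := fun i => fam i i.

Lemma phiF_lin : LinF1 phiF.
Proof. by move=> i; exact: (Ilin (fam_inv i)). Qed.
Lemma phiF_0 x : phiF 0%N x = x.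
Proof. exact: (I0 (fam_inv 0)). Qed.
Lemma phiF_al i x : phiF i (al x) = al (phiF i x).
Proof. exact: (Ial (fam_inv i)). Qed.

Lemma phiF_loc n i x : (i <= n)%N -> phiF i x = fam n i x.
Proof. by move=> inn; rewrite fam_stable. Qed.

Lemma nullf_lin : LinF2 (null_f br).
Proof.
case=> [|i] //=; split=> [z|x] c u v /=; by rewrite ?scaler0 ?addr0.
Qed.
Lemma nullg_lin : LinF3 (null_g tr).
Proof.
case=> [|i] //=; split; [|split] => [y z|x z|x y] c u v /=; by rewrite ?scaler0 ?addr0.
Qed.

Lemma final_f a b :
  ext1 phiF (ext2 f a b) = ext2 (null_f br) (ext1 phiF a) (ext1 phiF b).
Proof.
have GP := ext1_good phiF_lin.
suff E : (fun a b => ext1 phiF (ext2 f a b)) =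
  (fun a b => ext2 (null_f br) (ext1 phiF a) (ext1 phiF b)).
  exact: (congr1 (fun F => F a b) E).
apply: uniq2.
- exact: good2_post (ext2_good Hf) GP.
- exact: good2_pre (ext2_good nullf_lin) GP.
move=> x y n /=.
have In := fam_inv n.
rewrite (@ext1_famloc _ _ _ (fam n)); last by move=> i z inn; apply: phiF_loc.
rewrite -(tf_P Hf (Ilin In) (I0 In)).
rewrite (@ext2_famloc _ _ _ (null_f br)); last first.
  move=> i u v inn; case: i inn => [|i] inn /=.
    exact: (tf_0 Hf0 (Ilin In) (I0 In)).
  by apply: (Ivf In).
apply: ext2_argloc => m mn; rewrite !(ext1_hat _ _ (Ilin In)) !(ext1_hat _ _ phiF_lin).
by rewrite -!phiF_loc.
Qed.

Lemma final_g a b c :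
  ext1 phiF (ext3 g a b c) =
  ext3 (null_g tr) (ext1 phiF a) (ext1 phiF b) (ext1 phiF c).
Proof.
have GP := ext1_good phiF_lin.
suff E : (fun a b c => ext1 phiF (ext3 g a b c)) =
  (fun a b c => ext3 (null_g tr) (ext1 phiF a) (ext1 phiF b) (ext1 phiF c)).
  exact: (congr1 (fun F => F a b c) E).
apply: uniq3.
- exact: good3_post (ext3_good Hg) GP.
- exact: good3_pre (ext3_good nullg_lin) GP.
move=> x y z n /=.
have In := fam_inv n.
rewrite (@ext1_famloc _ _ _ (fam n)); last by move=> i w inn; apply: phiF_loc.
rewrite -(tg_P Hg (Ilin In) (I0 In)).
rewrite (@ext3_famloc _ _ _ (null_g tr)); last first.
  move=> i u v w inn; case: i inn => [|i] inn /=.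
    exact: (tg_0 Hg0 (Ilin In) (I0 In)).
  by apply: (Ivg In).
apply: ext3_argloc => m mn; rewrite !(ext1_hat _ _ (Ilin In)) !(ext1_hat _ _ phiF_lin).
by rewrite -!phiF_loc.
Qed.

Lemma final_triv : trivial_deformation br tr al f g.
Proof.
exists phiF; split.
- split; first exact: phiF_lin.
  by apply: funext => x; exact: phiF_0.
- exists (Psi phiF).
    exact: (PsiP phiF_lin phiF_0).
  exact: (PPsi phiF_lin phiF_0).
- exact: (P_al Hal phiF_al).
- exact: final_f.
- exact: final_g.
Qed.

End Final.

Theorem mainTheorem5 (K : fieldType) (L : lmodType K)
  (br : L -> L -> L) (tr : L -> L -> L -> L) (al : L -> L) :
  HLYA br tr al -> HomH23_zero br tr al -> analytically_rigid br tr al.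
Proof.
move=> [Hbr Htr Hal _] H0 f g [Hf0 Hg0 Hf Hg Hid].
exact: final_triv.
Qed.
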